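(* For every $M>0$ there exists a function $\phi:\mathbb{R}^2\to\mathbb{R}$ generated by a $\sigma$-activated network with width $9$ and depth $2$ such that $\phi(x,y)=xy$ for all $x,y\in[-M,M]$.
   Context: Let $\sigma_1:\mathbb{R}\to\mathbb{R}$ be the continuous triangular-wave function of period $2$: $\sigma_1(x)=|x|$ for $x\in[-1,1]$, $\sigma_1(x+2)=\sigma_1(x)$. The activation is $\sigma(x)=\sigma_1(x)$ for $x\ge0$ and $\sigma(x)=x/(|x|+1)$ for $x<0$, applied entrywise. A function generated by a $\sigma$-activated network with input dimension $n$, width $N$ and depth $L$ is a function of the form $\mathcal{L}_{\ell}\circ\sigma\circ\mathcal{L}_{\ell-1}\circ\cdots\circ\sigma\circ\mathcal{L}_0$ with $\ell\le L$ hidden layers, affine maps $\mathcal{L}_i$, $\mathcal{L}_0$ with domain $\mathbb{R}^n$, $\mathcal{L}_\ell$ with codomain $\mathbb{R}$, and at most $N$ neurons in each hidden layer. *)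

(* Defs.v *)
From HB Require Import structures.
From mathcomp Require Import all_boot all_order all_algebra.
From mathcomp Require Import reals.
Set Implicit Arguments. Unset Strict Implicit. Unset Printing Implicit Defensive.
Import Order.TTheory GRing.Theory Num.Theory.
Local Open Scope ring_scope.

(* Triangular wave of period 2: sigma1 x = |x| on [-1,1], sigma1 (x+2) = sigma1 x.
   Explicit formula: |x - 2*floor((x+1)/2)|. *)
Definition sigma1 {R : realType} (x : R) : R :=
  `| x - 2 * (Num.floor ((x + 1) / 2))%:~R |.

Definition sigma {R : realType} (x : R) : R :=
  if 0 <= x then sigma1 x else x / (`|x| + 1).

(* A sigma-activated network with input dimension n:
   - [Out w b] is the final affine map R^n -> R, x |-> w x + b;
   - [Hidden A b rest] is an affine map R^n -> R^m, x |-> A x + b,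
     followed by entrywise sigma (a hidden layer with m neurons),
     followed by the rest of the network on R^m. *)
Inductive net (R : realType) : nat -> Type :=
| Out : forall n, 'rV[R]_n -> R -> net R n
| Hidden : forall n m, 'M[R]_(m, n) -> 'cV[R]_m -> net R m -> net R n.

Fixpoint net_eval {R : realType} {n} (nt : net R n) : 'cV[R]_n -> R :=
  match nt in net _ n return 'cV[R]_n -> R with
  | Out _ w b => fun x => (w *m x) 0 0 + b
  | Hidden _ _ A b rest => fun x => net_eval rest (map_mx sigma (A *m x + b))
  end.

Fixpoint net_depth {R : realType} {n} (nt : net R n) : nat :=
  match nt with
  | Out _ _ _ => 0%N
  | Hidden _ _ _ _ rest => (net_depth rest).+1
  end.

Fixpoint net_width {R : realType} {n} (nt : net R n) : nat :=
  match nt with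
  | Out _ _ _ => 0%N
  | Hidden _ m _ _ rest => maxn m (net_width rest)
  end.

Definition generated_by {R : realType} (n N L : nat) (f : 'cV[R]_n -> R) : Prop :=
  exists nt : net R n,
    (net_depth nt <= L)%N /\ (net_width nt <= N)%N /\ forall x, net_eval nt x = f x.

Definition vec2 {R : realType} (x y : R) : 'cV[R]_2 := \col_i [:: x; y]`_i.
Arguments generated_by {R} n N L f.

(* Main.v *)
Require Import Defs.
From HB Require Import structures.
From mathcomp Require Import all_boot all_order all_algebra.
From mathcomp Require Import reals.
From mathcomp Require Import ring lra.
Import Order.TTheory GRing.Theory Num.Theory.
Local Open Scope ring_scope.

Lemma sigma_neg (R : realType) (z : R) : z < 0 -> sigma z = -1 + 1 / (1 - z).
Proof.
move=> hz; rewrite /sigma leNgt hz /= ltr0_norm //.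
have h : 1 - z != 0 by rewrite subr_eq0; apply/eqP => e; lra.
field; by [].
Qed.
Lemma sq_step (R : realType) (c u : R) : 1 < c - u -> 1 < c + u ->
  sigma ((1 - 2 * c) - c * sigma (1 - c + u) - c * sigma (1 - c - u))
  = -1 + (c ^+ 2 - u ^+ 2) / (2 * c ^+ 2).
Proof.
move=> h1 h2; have h1' : 0 < c - u by lra. have h2' : 0 < c + u by lra.
rewrite (@sigma_neg R (1 - c + u)); last by lra.
rewrite (@sigma_neg R (1 - c - u)); last by lra.
have e1 : 1 - (1 - c + u) = c - u by ring.
have e2 : 1 - (1 - c - u) = c + u by ring.
rewrite e1 e2.
have hc : 0 < c by lra.
have ht : (1 - 2 * c) - c * (-1 + 1 / (c - u)) - c * (-1 + 1 / (c + u))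
   = 1 - 2 * c ^+ 2 / ((c - u) * (c + u)).
  field; apply/andP; split; apply/lt0r_neq0 => //.
rewrite ht.
have hp : 0 < (c - u) * (c + u) by apply: mulr_gt0.
have hle : (c - u) * (c + u) <= c ^+ 2.
  have : (c - u) * (c + u) = c ^+ 2 - u ^+ 2 by ring.
  move=> ->; have := sqr_ge0 u; lra.
rewrite sigma_neg; last first.
  rewrite subr_lt0 ltr_pdivlMr // mul1r.
  have : 0 < c ^+ 2 by apply: exprn_gt0.
  lra.
have e3 : 1 - (1 - 2 * c ^+ 2 / ((c - u) * (c + u))) = 2 * c ^+ 2 / ((c - u) * (c + u)) by ring.
rewrite e3.
field; by rewrite (lt0r_neq0 hc) (lt0r_neq0 h1') (lt0r_neq0 h2').
Qed.
Definition A1 (R : realType) : 'M[R]_(4, 2) :=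
  \matrix_(i < 4, j < 2) (if j == 0 then [:: 1; -1; 1; -1]`_i else [:: 1; -1; -1; 1]`_i).
Definition A2 {R : realType} (c : R) : 'M[R]_(2, 4) :=
  \matrix_(k < 2, i < 4) (if i./2 == k then - c else 0).
Definition wout {R : realType} (c : R) : 'rV[R]_2 :=
  \row_(k < 2) [:: - c ^+ 2 / 2; c ^+ 2 / 2]`_k.

Definition thenet {R : realType} (c : R) : net R 2 :=
  Hidden (A1 R) (const_mx (1 - c))
   (Hidden (A2 c) (const_mx (1 - 2 * c)) (Out (wout c) 0)).

Lemma eval_net (R : realType) (c x y : R) :
  net_eval (thenet c) (vec2 x y) =
  - c ^+ 2 / 2 * sigma ((1 - 2 * c) - c * sigma (1 - c + (x + y)) - c * sigma (1 - c - (x + y)))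
  + c ^+ 2 / 2 * sigma ((1 - 2 * c) - c * sigma (1 - c + (x - y)) - c * sigma (1 - c - (x - y))).
Proof.
rewrite /= /vec2.
rewrite !(big_ord_recr, big_ord0, mxE) /=.
rewrite !(mul1r, mulN1r, mul0r, add0r, addr0).
have -> : x + y + (1 - c) = 1 - c + (x + y) by ring.
have -> : - x - y + (1 - c) = 1 - c - (x + y) by ring.
have -> : x - y + (1 - c) = 1 - c + (x - y) by ring.
have -> : - x + y + (1 - c) = 1 - c - (x - y) by ring.
congr (_ * sigma _ + _ * sigma _); ring.
Qed.

Theorem lemma16 (R : realType) (M : R) (hM : 0 < M) :
  exists phi : 'cV[R]_2 -> R,
    generated_by 2%N 9%N 2%N phi /\
    forall x y : R, -M <= x <= M -> -M <= y <= M -> phi (vec2 x y) = x * y.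
Proof.
pose c := 2 * M + 2.
exists (net_eval (thenet c)); split.
  by exists (thenet c); split => //; split.
move=> x y /andP[hx1 hx2] /andP[hy1 hy2].
rewrite eval_net !sq_step; rewrite /c; try lra.
have hc : 2 * M + 2 != 0 by apply/lt0r_neq0; lra.
field; by rewrite hc.
Qed.
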